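(* Let $A=(A_1,A_2)\in V_2$ satisfy $\sigma_{12}(A)\neq 0$. Then $A$ is similar to a pair $B=(B_1,B_2)$ with $B_1^T=B_1$ and $B_2^T=B_2$.
   Context: $V_2=(M_{2\times2}(\mathbb{C}))^{\times 2}$ with $GL(2,\mathbb{C})$ acting by simultaneous conjugation; similar means same orbit. With $t_j=\mathsf{tr}(A_j)$, $t_{jk}=\mathsf{tr}(A_jA_k)$, $\tau_{jk}=t_{jk}-\tfrac12t_jt_k$ and $\sigma_{12}=\tau_{12}^2-\tau_{11}\tau_{22}$. $T$ denotes transposition. *)

(* Defs.v *)
From mathcomp Require Import all_boot all_algebra.
Set Implicit Arguments. Unset Strict Implicit. Unset Printing Implicit Defensive.
Import GRing.Theory Num.Theory.
Local Open Scope ring_scope.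

Definition tau2 (C : numClosedFieldType) (X Y : 'M[C]_2) : C :=
  \tr (X *m Y) - 2^-1 * (\tr X * \tr Y).

Definition sigma12 (C : numClosedFieldType) (A1 A2 : 'M[C]_2) : C :=
  tau2 A1 A2 ^+ 2 - tau2 A1 A1 * tau2 A2 A2.

Definition similar_pair (C : numClosedFieldType) (A1 A2 B1 B2 : 'M[C]_2) : Prop :=
  exists P : 'M[C]_2, P \in unitmx /\
    B1 = P *m A1 *m invmx P /\ B2 = P *m A2 *m invmx P.

(* Main.v *)
Require Import Defs.
From mathcomp Require Import all_boot all_algebra.
From mathcomp Require Import ring.
Set Implicit Arguments. Unset Strict Implicit. Unset Printing Implicit Defensive.
Import GRing.Theory Num.Theory.
Local Open Scope ring_scope.

Notation o0 := (@Ordinal 2 0 isT).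
Notation o1 := (@Ordinal 2 1 isT).

Lemma sum2 (R : nmodType) (F : 'I_2 -> R) : \sum_(i < 2) F i = F o0 + F o1.
Proof. rewrite big_ord_recl big_ord1; congr (F _ + F _); exact: val_inj. Qed.

Lemma ord2P (P : 'I_2 -> Prop) : P o0 -> P o1 -> forall i, P i.
Proof.
move=> H0 H1 [[|[|//]] p].
  by have -> : Ordinal p = o0 by apply: val_inj.
by have -> : Ordinal p = o1 by apply: val_inj.
Qed.

Lemma det2 (R : comNzRingType) (A : 'M[R]_2) : \det A = A o0 o0 * A o1 o1 - A o0 o1 * A o1 o0.
Proof.
rewrite (expand_det_row _ o0) sum2 /cofactor !det_mx11 !mxE /=.
rewrite expr0 expr1 /=.
have -> : lift o0 (0 : 'I_1) = o1 by apply/val_inj.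
have -> : lift o1 (0 : 'I_1) = o0 by apply/val_inj.
ring.
Qed.

Definition Jm (R : comNzRingType) : 'M[R]_2 := \matrix_(i < 2, j < 2) ((j%:Z - i%:Z)%:~R).

Ltac mx2 := apply/matrixP; apply: ord2P; apply: ord2P;
  repeat (rewrite sum2 || rewrite mxE); rewrite /=.

Section S.
Variable R : comNzRingType.
Variables A B : 'M[R]_2.
Let S := (A *m B - B *m A) *m Jm R.

Lemma S_sym : S^T = S.
Proof. rewrite /S; mx2; ring. Qed.
Lemma AS_sym : (A *m S)^T = A *m S.
Proof. rewrite /S; mx2; ring. Qed.
Lemma BS_sym : (B *m S)^T = B *m S.
Proof. rewrite /S; mx2; ring. Qed.
End S.

Lemma detS (C : numClosedFieldType) (A B : 'M[C]_2) :
  \det ((A *m B - B *m A) *m Jm C) = - sigma12 A B.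
Proof.
have h2 : (2 : C) != 0 by rewrite pnatr_eq0.
rewrite det2 /sigma12 /tau2 /mxtrace; repeat (rewrite sum2 || rewrite mxE); rewrite /=.
by field.
Qed.

Definition mk (C : comNzRingType) (a b c d : C) : 'M[C]_2 :=
  \matrix_(i < 2, j < 2) if (i : nat) == 0%N then (if (j : nat) == 0%N then a else b)
                         else (if (j : nat) == 0%N then c else d).

Lemma mk_unit (C : numClosedFieldType) (x y z w : C) :
  x * w - y * z != 0 -> mk x y z w \in unitmx.
Proof. by rewrite unitmxE unitfE det2 !mxE. Qed.

Lemma case1 (C : numClosedFieldType) (S : 'M[C]_2) (r s : C) :
  S o1 o0 = S o0 o1 -> S o0 o0 = r ^+ 2 -> S o1 o1 = s ^+ 2 + (S o0 o1) ^+ 2 / r ^+ 2 ->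
  r != 0 -> S = mk r 0 (S o0 o1 / r) s *m (mk r 0 (S o0 o1 / r) s)^T.
Proof.
move=> Sb h0 h1 r0; mx2; rewrite ?Sb ?h0 ?h1; field; by rewrite ?r0.
Qed.

Lemma case2 (C : numClosedFieldType) (S : 'M[C]_2) (r s : C) :
  S o1 o0 = S o0 o1 -> S o1 o1 = r ^+ 2 -> S o0 o0 = s ^+ 2 + (S o0 o1) ^+ 2 / r ^+ 2 ->
  r != 0 -> S = mk s (S o0 o1 / r) 0 r *m (mk s (S o0 o1 / r) 0 r)^T.
Proof.
move=> Sb h0 h1 r0; mx2; rewrite ?Sb ?h0 ?h1; field; by rewrite ?r0.
Qed.

Lemma case3 (C : numClosedFieldType) (S : 'M[C]_2) (i : C) :
  S o1 o0 = S o0 o1 -> S o0 o0 = 0 -> S o1 o1 = 0 -> i ^+ 2 = -1 ->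
  S = mk 1 i (S o0 o1 / 2) (- i * S o0 o1 / 2) *m (mk 1 i (S o0 o1 / 2) (- i * S o0 o1 / 2))^T.
Proof.
move=> Sb h0 h1 hi.
have h2 : (2 : C) != 0 by rewrite pnatr_eq0.
have H : forall k x y, x - y = (i ^+ 2 + 1) * k -> x = y.
  by move=> k x y; rewrite hi addNr mul0r => /eqP; rewrite subr_eq0 => /eqP.
set b := S o0 o1.
mx2; rewrite ?Sb ?h0 ?h1 -/b.
- by apply: (H (-1)); ring.
- by apply: (H (b / 2)); field.
- by apply: (H (b / 2)); field.
- by apply: (H (- b ^+ 2 / 4)); field.
Qed.

Lemma factor_sym (C : numClosedFieldType) (S : 'M[C]_2) :
  S^T = S -> \det S != 0 -> exists Q, Q \in unitmx /\ S = Q *m Q^T.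
Proof.
move=> Ssym dS.
have Sb : S o1 o0 = S o0 o1 by rewrite -{1}Ssym mxE.
rewrite det2 Sb in dS.
have [a0|a0] := eqVneq (S o0 o0) 0.
  have [c0|c0] := eqVneq (S o1 o1) 0.
    have hi : sqrtC (-1 : C) ^+ 2 = -1 by rewrite sqrtCK.
    have i0 : sqrtC (-1 : C) != 0.
      apply/eqP => i0; move: hi; rewrite i0 expr0n /= => /esym/eqP.
      by rewrite oppr_eq0 oner_eq0.
    have b0 : S o0 o1 != 0.
      by apply: contraNneq dS => ->; rewrite a0 c0 !mul0r subrr.
    exists (mk 1 (sqrtC (-1)) (S o0 o1 / 2) (- sqrtC (-1) * S o0 o1 / 2)); split.
      apply: mk_unit.
      have h2 : (2 : C) != 0 by rewrite pnatr_eq0.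
      have -> : 1 * (- sqrtC (-1) * S o0 o1 / 2) - sqrtC (-1) * (S o0 o1 / 2)
               = - (sqrtC (-1) * S o0 o1) by field.
      by rewrite oppr_eq0 mulf_neq0.
    exact: case3.
  set r := sqrtC (S o1 o1); set s := sqrtC (S o0 o0 - S o0 o1 ^+ 2 / S o1 o1).
  have hr : r ^+ 2 = S o1 o1 by rewrite sqrtCK.
  have hs : s ^+ 2 = S o0 o0 - S o0 o1 ^+ 2 / S o1 o1 by rewrite sqrtCK.
  have r0 : r != 0 by apply: contraNneq c0 => r0; rewrite -hr r0 expr0n.
  have s0 : s != 0.
    apply: contraNneq dS => s0; move: hs; rewrite s0 expr0n /= => /esym/eqP.
    rewrite subr_eq0 => /eqP h; rewrite h; apply/eqP; by field.
  exists (mk s (S o0 o1 / r) 0 r); split.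
    by apply: mk_unit; rewrite mulr0 subr0 mulf_neq0.
  apply: case2 => //.
  by rewrite hs hr; field.
set r := sqrtC (S o0 o0); set s := sqrtC (S o1 o1 - S o0 o1 ^+ 2 / S o0 o0).
have hr : r ^+ 2 = S o0 o0 by rewrite sqrtCK.
have hs : s ^+ 2 = S o1 o1 - S o0 o1 ^+ 2 / S o0 o0 by rewrite sqrtCK.
have r0 : r != 0 by apply: contraNneq a0 => r0; rewrite -hr r0 expr0n.
have s0 : s != 0.
  apply: contraNneq dS => s0; move: hs; rewrite s0 expr0n /= => /esym/eqP.
  rewrite subr_eq0 => /eqP h; rewrite h; apply/eqP; by field.
exists (mk r 0 (S o0 o1 / r) s); split.
  by apply: mk_unit; rewrite mul0r subr0 mulf_neq0.
apply: case1 => //.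
by rewrite hs hr; field.
Qed.

Theorem proposition2p12 (C : numClosedFieldType) (A1 A2 : 'M[C]_2) :
  sigma12 A1 A2 != 0 ->
  exists B1 B2 : 'M[C]_2,
    similar_pair A1 A2 B1 B2 /\ B1^T = B1 /\ B2^T = B2.
Proof.
move=> hs.
set S := (A1 *m A2 - A2 *m A1) *m Jm C.
have [Q [Qu SQ]] : exists Q, Q \in unitmx /\ S = Q *m Q^T.
  apply: factor_sym; first exact: S_sym.
  by rewrite detS oppr_eq0.
have QTu : Q^T \in unitmx by rewrite unitmx_tr.
have eQ : Q = S *m invmx Q^T by rewrite SQ mulmxK.
have key : forall X : 'M[C]_2, (X *m S)^T = X *m S ->
    invmx Q *m X *m invmx (invmx Q) = invmx Q *m (X *m S) *m (invmx Q)^T.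
  move=> X _; rewrite invmxK trmx_inv -!mulmxA; congr (_ *m (_ *m _)); by rewrite {1}eQ /S !mulmxA.
have symm : forall X : 'M[C]_2, (X *m S)^T = X *m S ->
    (invmx Q *m (X *m S) *m (invmx Q)^T)^T = invmx Q *m (X *m S) *m (invmx Q)^T.
  by move=> X hA; rewrite trmx_mul [(_ *m (X *m S))^T]trmx_mul hA trmxK mulmxA.
exists (invmx Q *m A1 *m invmx (invmx Q)), (invmx Q *m A2 *m invmx (invmx Q)).
split; first by exists (invmx Q); split; rewrite ?unitmx_inv.
rewrite !key ?symm //; [exact: BS_sym | exact: AS_sym | exact: BS_sym | exact: AS_sym].
Qed.
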